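(* Let $\alpha\in\mathbb{Z}_2^n$ and $c\in\mathbb{Z}_2$. Then $$\max_{\beta,\gamma\in\mathbb{Z}_2^n}\mathrm{cadp}_c(\alpha,\beta,\gamma)\le\max_{\beta,\gamma\in\mathbb{Z}_2^n}\mathrm{cadp}_0(\alpha,\beta,\gamma)=\max_{\beta,\gamma\in\mathbb{Z}_2^n}\mathrm{adp}^{\oplus}(\alpha,\beta\to\gamma)=\mathrm{adp}^{\oplus}(\alpha,\alpha\to0).$$
   Context: For $x\in\mathbb{Z}_2^n$, $x=(x_0,\dots,x_{n-1})$ is identified with the integer $\sum_i x_i2^{n-1-i}$; $+$ is addition modulo $2^n$, $\oplus$ is bitwise XOR. $\mathrm{adp}^{\oplus}(\alpha,\beta\to\gamma)=4^{-n}\#\{(x,y): (x+\alpha)\oplus(y+\beta)=(x\oplus y)+\gamma\}$. Indices $0,\dots,7$ are identified with $\mathbb{Z}_2^3$ via $(p_0,p_1,p_2)\leftrightarrow4p_0+2p_1+p_2$; $e_0,\dots,e_7$ are the standard basis row vectors of $\mathbb{Q}^8$. $A_0$ is $\frac14$ times the $8\times8$ matrix with rows $(4,0,0,1,0,1,1,0)$, $(0,0,0,1,0,1,0,0)$, $(0,0,0,1,0,0,1,0)$, $(0,0,0,1,0,0,0,0)$, $(0,0,0,0,0,1,1,0)$, $(0,0,0,0,0,1,0,0)$, $(0,0,0,0,0,0,1,0)$, $(0,\dots,0)$, and $(A_k)_{i,j}=(A_0)_{i\oplus k,j\oplus k}$. For $\alpha,\beta,\gamma$ let $\omega_i=4\alpha_i+2\beta_i+\gamma_i$.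 With $L_0=(1,0,1,0,1,0,1,0)$, $L_1=(0,1,0,1,0,1,0,1)$, $\mathrm{cadp}_c(\alpha,\beta,\gamma)=L_cA_{\omega_0}\cdots A_{\omega_{n-1}}e_0^T$. (It is known that $\mathrm{adp}^{\oplus}(\alpha,\beta\to\gamma)=\mathrm{cadp}_0(\alpha,\beta,\gamma)+\mathrm{cadp}_1(\alpha,\beta,\gamma)$.) *)

(* Defs.v *)
From HB Require Import structures.
From mathcomp Require Import all_boot all_order all_algebra.
From Stdlib Require Import PeanoNat.
Set Implicit Arguments. Unset Strict Implicit. Unset Printing Implicit Defensive.
Import Order.TTheory GRing.Theory Num.Theory.
Local Open Scope ring_scope.

Definition bv (n : nat) := n.-tuple bool.

(* integer identification: x <-> sum_i x_i 2^(n-1-i)  (x_0 most significant) *)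
Definition toNat n (x : bv n) : nat :=
  (\sum_(i < n) (tnth x i) * 2 ^ (n.-1 - i))%N.

Definition ofNat n (k : nat) : bv n :=
  [tuple odd (k %/ 2 ^ (n.-1 - i)) | i < n].

Definition addm n (x y : bv n) : bv n := ofNat n (toNat x + toNat y).

Definition xorv n (x y : bv n) : bv n := [tuple tnth x i (+) tnth y i | i < n].

Definition zerov n : bv n := [tuple false | i < n].

Definition adp n (alpha beta gamma : bv n) : rat :=
  (#|[set p : bv n * bv n |
       xorv (addm p.1 alpha) (addm p.2 beta) == addm (xorv p.1 p.2) gamma]|)%:R
  / (4 ^ n)%:R.

Definition xor8 (i k : 'I_8) : 'I_8 := inord (Nat.lxor i k).

Definition A0 : 'M[rat]_8 :=
  (1 / 4%:R) *: \matrix_(i < 8, j < 8)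
    (nth 0 (nth [::] [:: [:: 4; 0; 0; 1; 0; 1; 1; 0];
                       [:: 0; 0; 0; 1; 0; 1; 0; 0];
                       [:: 0; 0; 0; 1; 0; 0; 1; 0];
                       [:: 0; 0; 0; 1; 0; 0; 0; 0];
                       [:: 0; 0; 0; 0; 0; 1; 1; 0];
                       [:: 0; 0; 0; 0; 0; 1; 0; 0];
                       [:: 0; 0; 0; 0; 0; 0; 1; 0];
                       [:: 0; 0; 0; 0; 0; 0; 0; 0]] i) j)%:R.

Definition Amat (k : 'I_8) : 'M[rat]_8 :=
  \matrix_(i < 8, j < 8) A0 (xor8 i k) (xor8 j k).

Definition omega n (alpha beta gamma : bv n) (i : 'I_n) : 'I_8 :=
  inord (4 * tnth alpha i + 2 * tnth beta i + tnth gamma i)%N.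

Definition Lvec (c : bool) : 'rV[rat]_8 := \row_(j < 8) (odd j == c)%:R.

Definition e0T : 'cV[rat]_8 := \col_(j < 8) (j == 0 :> nat)%:R.

Definition cadp (c : bool) n (alpha beta gamma : bv n) : rat :=
  (Lvec c *m (\prod_(i < n) Amat (omega alpha beta gamma i)) *m e0T) 0 0.

(* maximum of f(beta, gamma) over all beta, gamma in Z_2^n
   (the big operator's unit f 0 0 is itself one of the values) *)
Definition maxBG n (f : bv n -> bv n -> rat) : rat :=
  \big[Num.max/f (zerov n) (zerov n)]_(p : bv n * bv n) f p.1 p.2.

(* Main.v *)
Require Import Defs.
From HB Require Import structures.
From mathcomp Require Import all_boot all_order all_algebra.
From Stdlib Require PeanoNat.
From mathcomp Require Import ring lra zify.
Import Order.TTheory GRing.Theory Num.Theory.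
Set Implicit Arguments. Unset Strict Implicit.

Local Open Scope ring_scope.

Definition maj (x a c : bool) := (x && a) || (x && c) || (a && c).
Definition bt0 (t : nat) := match t with 4 | 5 | 6 | 7 => true | _ => false end.
Definition bt1 (t : nat) := match t with 2 | 3 | 6 | 7 => true | _ => false end.
Definition bt2 (t : nat) := odd t.
Definition cf (a b g : bool) (t : nat) (c1 c2 c3 x y : bool) : nat :=
  (~~ (a (+) b (+) g (+) c1 (+) c2 (+) c3) && (bt0 t == maj x a c1)
     && (bt1 t == maj y b c2) && (bt2 t == maj (x (+) y) g c3)).
Definition cntS (a b g : bool) (t : nat) (c1 c2 c3 : bool) : nat :=
  (cf a b g t c1 c2 c3 false false + cf a b g t c1 c2 c3 false true +
   cf a b g t c1 c2 c3 true false + cf a b g t c1 c2 c3 true true)%N.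
Definition om (a b g : bool) : 'I_8 := inord (4 * a + 2 * b + g).

Lemma lxor_lt8 (i k : nat) : (i < 8)%N -> (k < 8)%N -> (PeanoNat.Nat.lxor i k < 8)%N.
Proof.
by do 8?[case: i => [|i]] => //; do 8?[case: k => [|k]].
Qed.

Lemma xor8E (i k : 'I_8) : (xor8 i k : nat) = PeanoNat.Nat.lxor i k.
Proof. by rewrite /xor8 inordK // lxor_lt8. Qed.

Lemma omE a b g : (om a b g : nat) = (4 * a + 2 * b + g)%N.
Proof. by rewrite /om inordK //; case: a; case: b; case: g. Qed.

Lemma Aval a b g (t m : 'I_8) :
  Amat (om a b g) t m = (cntS a b g t (bt0 m) (bt1 m) (bt2 m))%:R / 4%:R.
Proof.
rewrite /Amat /A0 !mxE !xor8E omE mul1r mulrC.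
congr (_%:R / _).
case: t m => t Ht [m Hm] /=.
by case: a; case: b; case: g;
  do 8?[case: t Ht => [|t] Ht] => //; do 8?[case: m Hm => [|m] Hm].
Qed.


Local Open Scope ring_scope.

Definition vec n (al be ga : bv n) : 'cV[rat]_8 :=
  (\prod_(i < n) Amat (omega al be ga i)) *m e0T.

Lemma vec0 (al be ga : bv 0) : vec al be ga = e0T.
Proof. by rewrite /vec big_ord0 mul1mx. Qed.

Lemma vec_cons n a b g (al be ga : bv n) :
  vec [tuple of a :: al] [tuple of b :: be] [tuple of g :: ga]
  = Amat (om a b g) *m vec al be ga.
Proof.
rewrite /vec big_ord_recl -mulmxE -mulmxA; congr (_ *m (_ *m _)).
all: rewrite /omega; try (apply: eq_bigr => i _); by rewrite ?tnth0 ?tnthS.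
Qed.

Lemma sum8 (F : 'I_8 -> rat) : \sum_(j < 8) F j =
  F (@Ordinal 8 0 isT) + F (@Ordinal 8 1 isT) + F (@Ordinal 8 2 isT) +
  F (@Ordinal 8 3 isT) + F (@Ordinal 8 4 isT) + F (@Ordinal 8 5 isT) +
  F (@Ordinal 8 6 isT) + F (@Ordinal 8 7 isT).
Proof.
rewrite !big_ord_recl big_ord0 addr0 !addrA.
by repeat (congr (_ + _)); congr F; apply: val_inj.
Qed.

Lemma sum8N (F : 'I_8 -> nat) : (\sum_(j < 8) F j =
  F (@Ordinal 8 0 isT) + F (@Ordinal 8 1 isT) + F (@Ordinal 8 2 isT) +
  F (@Ordinal 8 3 isT) + F (@Ordinal 8 4 isT) + F (@Ordinal 8 5 isT) +
  F (@Ordinal 8 6 isT) + F (@Ordinal 8 7 isT))%N.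
Proof.
rewrite !big_ord_recl big_ord0 addn0 !addnA.
by repeat (congr (_ + _)%N); congr F; apply: val_inj.
Qed.

Fixpoint Lf (s : seq bool) : rat * rat :=
  match s with
  | [::] => (1, 0)
  | a :: s' => let: (P, Q) := Lf s' in
      if a then (P / 4%:R, Q + P / 4%:R) else (P + Q / 4%:R, Q / 4%:R)
  end.
Definition L (c : bool) (s : seq bool) := if c then (Lf s).2 else (Lf s).1.

Definition ind (c p : bool) (j : nat) : bool :=
  (bt0 j == c) && ((bt1 j (+) bt2 j) == p).

Definition Mc (c p : bool) (v : 'cV[rat]_8) : rat :=
  \sum_(j < 8) (ind c p j)%:R * v j 0.

Lemma colsum a b g (j : 'I_8) :
  (\sum_(i < 8) cntS a b g i (bt0 j) (bt1 j) (bt2 j))%N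
  = (4 * ~~ (a (+) b (+) g (+) bt0 j (+) bt1 j (+) bt2 j))%N.
Proof.
rewrite sum8N; case: j => j Hj.
by case: a; case: b; case: g; do 8?[case: j Hj => [|j] Hj].
Qed.

Lemma Kbound a b g c p (j : 'I_8) :
  (\sum_(i < 8) ind c p i * cntS a b g i (bt0 j) (bt1 j) (bt2 j)
   <= 4 * ((c == a) && ind a (b (+) g) j) + ind (~~ a) (~~ (b (+) g)) j)%N.
Proof.
rewrite sum8N; case: j => j Hj.
by case: a; case: b; case: g; case: c; case: p; do 8?[case: j Hj => [|j] Hj].
Qed.

Lemma okE a b g (j : 'I_8) :
  (nat_of_bool (~~ (a (+) b (+) g (+) bt0 j (+) bt1 j (+) bt2 j))
  = ind false (a (+) b (+) g) j + ind true (~~ (a (+) b (+) g)) j)%N.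
Proof.
case: j => j Hj.
by case: a; case: b; case: g; do 8?[case: j Hj => [|j] Hj].
Qed.

Lemma Amv a b g (v : 'cV[rat]_8) i :
  (Amat (om a b g) *m v) i 0
  = \sum_(j < 8) (cntS a b g i (bt0 j) (bt1 j) (bt2 j))%:R / 4%:R * v j 0.
Proof. by rewrite mxE; apply: eq_bigr => j _; rewrite Aval. Qed.

Lemma Mc_step a b g (v : 'cV[rat]_8) c p : Mc c p (Amat (om a b g) *m v) =
  \sum_(j < 8) (\sum_(i < 8) ind c p i * cntS a b g i (bt0 j) (bt1 j) (bt2 j))%N%:R
     / 4%:R * v j 0.
Proof.
rewrite /Mc; under eq_bigr do rewrite Amv mulr_sumr.
rewrite exchange_big; apply: eq_bigr => j _.
rewrite natr_sum !mulr_suml; apply: eq_bigr => i _.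
by rewrite natrM !mulrA.
Qed.

Lemma Mc_le a b g (v : 'cV[rat]_8) c p : (forall j, 0 <= v j 0) ->
  Mc c p (Amat (om a b g) *m v) <=
  (c == a)%:R * Mc a (b (+) g) v + Mc (~~ a) (~~ (b (+) g)) v / 4%:R.
Proof.
move=> H; rewrite Mc_step.
apply: le_trans (_ : \sum_(j < 8) (4 * ((c == a) && ind a (b (+) g) j)
    + ind (~~ a) (~~ (b (+) g)) j)%N%:R / 4%:R * v j 0 <= _).
  apply: ler_sum => j _; apply: ler_wpM2r => //.
  by apply: ler_wpM2r => //; rewrite ler_nat Kbound.
rewrite /Mc mulr_sumr mulr_suml -big_split /= le_eqVlt; apply/orP; left; apply/eqP.
apply: eq_bigr => j _.
case: (c == a); case: (ind a (b (+) g) j); case: (ind (~~ a) (~~ (b (+) g)) j);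
  rewrite /=; lra.
Qed.


Local Open Scope ring_scope.

Lemma vec_ge0 n (al be ga : bv n) j : 0 <= vec al be ga j 0.
Proof.
elim: n al be ga j => [|n IH] al be ga j.
  by rewrite vec0 mxE ler0n.
case/tupleP: al => a al; case/tupleP: be => b be; case/tupleP: ga => g ga.
rewrite vec_cons mxE; apply: sumr_ge0 => k _.
by rewrite Aval mulr_ge0 // divr_ge0 // ler0n.
Qed.

Lemma L_cons c a (al : seq bool) :
  (c == a)%:R * L a al + L (~~ a) al / 4%:R = L c (a :: al).
Proof.
rewrite /L /=; case: (Lf al) => P Q /=.
case: a; case: c => /=; lra.
Qed.

Lemma vec_inv n (al be ga : bv n) c p : Mc c p (vec al be ga) <= L c al.
Proof.
elim: n al be ga c p => [|n IH] al be ga c p.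
  rewrite vec0 /Mc sum8 !mxE (tuple0 al) /L /=.
  by case: c; case: p => /=; lra.
case/tupleP: al => a al; case/tupleP: be => b be; case/tupleP: ga => g ga.
rewrite vec_cons.
apply: le_trans (Mc_le _ _ _ _ _ (vec_ge0 al be ga)) _.
have -> : L c [tuple of a :: al] = L c (a :: al) by [].
rewrite -L_cons.
apply: lerD; last by apply: ler_wpM2r => //; apply: IH.
by apply: ler_wpM2l => //; apply: IH.
Qed.

Definition tot (v : 'cV[rat]_8) := \sum_(j < 8) v j 0.

Lemma tot_step a b g (v : 'cV[rat]_8) :
  tot (Amat (om a b g) *m v) =
  Mc false (a (+) b (+) g) v + Mc true (~~ (a (+) b (+) g)) v.
Proof.
rewrite /tot; under eq_bigr do rewrite Amv.
rewrite exchange_big /Mc -big_split; apply: eq_bigr => j _ /=.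
rewrite -mulr_suml -mulr_suml -natr_sum colsum -mulrDl -natrD -okE natrM.
by field.
Qed.

Lemma tot_le n (al be ga : bv n) :
  tot (vec al be ga) <= (if n is 0 then 1 else L false (behead al) + L true (behead al)).
Proof.
case: n al be ga => [|n] al be ga.
  by rewrite vec0 /tot sum8 !mxE /=; lra.
case/tupleP: al => a al; case/tupleP: be => b be; case/tupleP: ga => g ga.
rewrite vec_cons tot_step /=.
by apply: lerD; apply: vec_inv.
Qed.

Lemma zerov_cons n : zerov n.+1 = [tuple of false :: zerov n].
Proof.
apply: eq_from_tnth => i; rewrite tnth_mktuple.
by case: (unliftP ord0 i) => [j ->|->]; rewrite ?tnthS ?tnth0 ?tnth_mktuple.
Qed.

Lemma star_inv n (al : bv n) :
  let w := vec al al (zerov n) in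
  [/\ w (@Ordinal 8 0 isT) 0 = L false al, w (@Ordinal 8 6 isT) 0 = L true al
    & forall j : 'I_8, odd j -> w j 0 = 0].
Proof.
elim: n al => [|n IH] al /=.
  rewrite vec0 !mxE (tuple0 al) /L /=; split => // -[j Hj] /= oj.
  by rewrite mxE; case: j Hj oj.
case/tupleP: al => a al; rewrite zerov_cons vec_cons.
have [H0 H6 Hodd] := IH al.
have H1 := Hodd (@Ordinal 8 1 isT) isT. have H3 := Hodd (@Ordinal 8 3 isT) isT.
have H5 := Hodd (@Ordinal 8 5 isT) isT. have H7 := Hodd (@Ordinal 8 7 isT) isT.
move: H0 H6 H1 H3 H5 H7.
set w := vec al al (zerov n).
have -> : (Lf [tuple of a :: al]).1 = L false (a :: al) by [].
have -> : (Lf [tuple of a :: al]).2 = L true (a :: al) by [].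
rewrite -!L_cons /= => H0 H6 H1 H3 H5 H7.
split.
- by rewrite Amv sum8 H0 H6 H1 H3 H5 H7; case: a; rewrite /cntS /cf /=; lra.
- by rewrite Amv sum8 H0 H6 H1 H3 H5 H7; case: a; rewrite /cntS /cf /=; lra.
- case=> j Hj /= oj; rewrite Amv sum8 H0 H6 H1 H3 H5 H7.
  by case: a; do 8?[case: j Hj oj => [|j] Hj oj] => //; rewrite /cntS /cf /=; lra.
Qed.


Local Close Scope ring_scope.

Lemma powE m n : Nat.pow m n = (m ^ n)%N.
Proof. by elim: n => [|n IH] //=; rewrite expnS IH. Qed.

Lemma toNatE n (x : bv n) :
  toNat x = (\sum_(i < n) tnth x i * expn 2 (n.-1 - i))%N.
Proof. by apply: eq_bigr => i _; rewrite powE. Qed.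

Lemma ofNatE n k : ofNat n k = [tuple odd (k %/ expn 2 (n.-1 - i)) | i < n].
Proof. by apply: eq_from_tnth => i; rewrite !tnth_mktuple powE. Qed.

Lemma toNat_cons n x0 (x : bv n) :
  toNat [tuple of x0 :: x] = (x0 * 2 ^ n + toNat x)%N.
Proof.
rewrite !toNatE big_ord_recl tnth0 /= subn0; congr (_ + _)%N.
apply: eq_bigr => i _; rewrite tnthS; congr (_ * 2 ^ _)%N.
rewrite /bump /=; case: n x i => [|n] x [i Hi] //=; lia.
Qed.

Lemma toNat_lt n (x : bv n) : (toNat x < 2 ^ n)%N.
Proof.
elim: n x => [|n IH] x.
  by rewrite toNatE big_ord0.
case/tupleP: x => x0 x; rewrite toNat_cons expnS.
have := IH x; case: x0 => /=; lia.
Qed.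

Lemma ofNat_cons n k :
  ofNat n.+1 k = [tuple of odd (k %/ 2 ^ n) :: ofNat n k].
Proof.
apply: eq_from_tnth => i; rewrite !ofNatE tnth_mktuple.
case: (unliftP ord0 i) => [j ->|->].
  rewrite tnthS tnth_mktuple /=; congr (odd (k %/ 2 ^ _)).
  case: j => j Hj; rewrite /bump /=; lia.
by rewrite tnth0 /= subn0.
Qed.

Lemma ofNat_mod n k m : ofNat n (m * 2 ^ n + k) = ofNat n k.
Proof.
apply: eq_from_tnth => i; rewrite !ofNatE !tnth_mktuple.
have -> : (2 ^ n = 2 ^ (n.-1 - i) * 2 ^ (n - (n.-1 - i)))%N.
  by rewrite -expnD; congr (2 ^ _)%N; case: i => i Hi /=; lia.
rewrite mulnA mulnAC divnMDl ?expn_gt0 // oddD oddM.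
have -> : odd (2 ^ (n - (n.-1 - i))) = false.
  rewrite oddX /=; case: i => i Hi /=; lia.
by rewrite andbF.
Qed.

Definition carry n (x a : bv n) : bool := (2 ^ n <= toNat x + toNat a)%N.

Lemma div_carry n (x a : bv n) :
  ((toNat x + toNat a) %/ 2 ^ n = carry x a)%N.
Proof.
rewrite /carry; have hx := toNat_lt x; have ha := toNat_lt a.
have hp : (0 < 2 ^ n)%N by rewrite expn_gt0.
case: leqP => h.
  apply/eqP; rewrite eqn_leq; apply/andP; split.
    by rewrite -ltnS ltn_divLR //; lia.
  by rewrite leq_divRL //; lia.
by rewrite divn_small.
Qed.

Lemma addm_cons n x0 a0 (x a : bv n) :
  addm [tuple of x0 :: x] [tuple of a0 :: a]
  = [tuple of x0 (+) a0 (+) carry x a :: addm x a].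
Proof.
rewrite /addm ofNat_cons !toNat_cons.
have -> : (x0 * 2 ^ n + toNat x + (a0 * 2 ^ n + toNat a)
           = (x0 + a0) * 2 ^ n + (toNat x + toNat a))%N by lia.
rewrite ofNat_mod divnMDl ?expn_gt0 // div_carry.
by congr [tuple of _ :: _]; case: x0; case: a0; case: (carry x a).
Qed.

Definition maj' := maj.

Lemma carry_cons n x0 a0 (x a : bv n) :
  carry [tuple of x0 :: x] [tuple of a0 :: a] = maj x0 a0 (carry x a).
Proof.
rewrite /carry !toNat_cons.
have hx := toNat_lt x; have ha := toNat_lt a.
have := div_carry x a; rewrite /carry.
have hp : (0 < 2 ^ n)%N by rewrite expn_gt0.
rewrite expnS /maj.
case: (leqP (2 ^ n) (toNat x + toNat a)) => h _;
  case: x0; case: a0 => /=; lia.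
Qed.

Lemma xorv_cons n x0 y0 (x y : bv n) :
  xorv [tuple of x0 :: x] [tuple of y0 :: y] = [tuple of x0 (+) y0 :: xorv x y].
Proof.
apply: eq_from_tnth => i; rewrite /xorv tnth_mktuple.
case: (unliftP ord0 i) => [j ->|->]; first by rewrite !tnthS tnth_mktuple.
by rewrite !tnth0.
Qed.


Local Close Scope ring_scope.

Definition good n (al be ga x y : bv n) : bool :=
  xorv (addm x al) (addm y be) == addm (xorv x y) ga.
Definition stOK n (al be ga x y : bv n) (t : nat) : bool :=
  (bt0 t == carry x al) && (bt1 t == carry y be) && (bt2 t == carry (xorv x y) ga).
Definition Cn n (al be ga : bv n) (t : nat) : nat :=
  \sum_(x : bv n) \sum_(y : bv n) (good al be ga x y && stOK al be ga x y t).

Lemma sum_tcons n (F : bv n.+1 -> nat) :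
  \sum_(x : bv n.+1) F x = \sum_(x0 : bool) \sum_(x : bv n) F [tuple of x0 :: x].
Proof.
rewrite pair_big /=.
rewrite (reindex (fun p : bool * bv n => [tuple of p.1 :: p.2])) //.
exists (fun t : bv n.+1 => (thead t, [tuple of behead t])).
  by case=> a x _ /=; congr pair; apply: val_inj.
by move=> t _ /=; rewrite [in RHS](tuple_eta t).
Qed.

Lemma sum_t0 (F : bv 0 -> nat) : \sum_(x : bv 0) F x = F [tuple].
Proof. by rewrite (big_pred1 [tuple]) // => x /=; apply/esym/eqP/tuple0. Qed.

Lemma sum2_tcons n (F : bv n.+1 -> bv n.+1 -> nat) :
  \sum_(x : bv n.+1) \sum_(y : bv n.+1) F x y =
  \sum_(x : bv n) \sum_(y : bv n) \sum_(x0 : bool) \sum_(y0 : bool)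
     F [tuple of x0 :: x] [tuple of y0 :: y].
Proof.
rewrite sum_tcons exchange_big; apply: eq_bigr => x _.
rewrite (eq_bigr (fun x0 => \sum_(y0 : bool) \sum_(y : bv n)
   F [tuple of x0 :: x] [tuple of y0 :: y])); last by move=> x0 _; rewrite sum_tcons.
rewrite (eq_bigr (fun x0 => \sum_(y : bv n) \sum_(y0 : bool)
   F [tuple of x0 :: x] [tuple of y0 :: y])); last by move=> x0 _; rewrite exchange_big.
by rewrite exchange_big.
Qed.

Lemma pick8 (f : bool -> bool -> bool -> nat) c1 c2 c3 :
  \sum_(m < 8) f (bt0 m) (bt1 m) (bt2 m) *
     ((bt0 m == c1) && (bt1 m == c2) && (bt2 m == c3)) = f c1 c2 c3.
Proof.
rewrite sum8N /=.
by case: c1; case: c2; case: c3; rewrite /= ?muln0 ?muln1 ?addn0 ?add0n.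
Qed.

Lemma cons_xy n a b g (al be ga x y : bv n) x0 y0 t :
  good [tuple of a :: al] [tuple of b :: be] [tuple of g :: ga]
       [tuple of x0 :: x] [tuple of y0 :: y] &&
  stOK [tuple of a :: al] [tuple of b :: be] [tuple of g :: ga]
       [tuple of x0 :: x] [tuple of y0 :: y] t
  = ((x0 (+) a (+) carry x al) (+) (y0 (+) b (+) carry y be) ==
       (x0 (+) y0) (+) g (+) carry (xorv x y) ga) && good al be ga x y &&
    ((bt0 t == maj x0 a (carry x al)) && (bt1 t == maj y0 b (carry y be)) &&
     (bt2 t == maj (x0 (+) y0) g (carry (xorv x y) ga))).
Proof.
rewrite /good /stOK !xorv_cons !addm_cons !xorv_cons !carry_cons.
by rewrite -val_eqE /= eqseq_cons.
Qed.

Lemma mul_andb (c : nat) (G s : bool) : (c * (G && s) = G * (c * s))%N.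
Proof. by case: G; case: s; rewrite ?mul0n ?muln0 ?mul1n. Qed.

Lemma Cn_step n a b g (al be ga : bv n) t :
  Cn [tuple of a :: al] [tuple of b :: be] [tuple of g :: ga] t =
  \sum_(m < 8) cntS a b g t (bt0 m) (bt1 m) (bt2 m) * Cn al be ga m.
Proof.
rewrite /Cn sum2_tcons; symmetry.
under eq_bigr => m _ do rewrite big_distrr /=.
rewrite exchange_big; apply: eq_bigr => x _.
under eq_bigr => m _ do rewrite big_distrr /=.
rewrite exchange_big; apply: eq_bigr => y _.
under eq_bigr => m _ do rewrite mul_andb.
rewrite -big_distrr /= /stOK.
rewrite (pick8 (fun c1 c2 c3 => cntS a b g t c1 c2 c3)).
rewrite !big_bool /= !cons_xy /cntS /cf.
move: (bt0 t) (bt1 t) (bt2 t) (carry x al) (carry y be) (carry (xorv x y) ga)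
  (good al be ga x y) => T0 T1 T2 c1 c2 c3 G.
by case: a; case: b; case: g; case: T0; case: T1; case: T2; case: c1; case: c2;
  case: c3; case: G.
Qed.


Local Open Scope ring_scope.

Lemma carry0 (x a : bv 0) : carry x a = false.
Proof. by rewrite /carry !toNatE !big_ord0. Qed.

Lemma good0 (al be ga x y : bv 0) : good al be ga x y = true.
Proof. by apply/eqP; rewrite [LHS]tuple0 [RHS]tuple0. Qed.

Lemma vec_Cn n (al be ga : bv n) (t : 'I_8) :
  vec al be ga t 0 = (Cn al be ga t)%:R / (expn 4 n)%:R.
Proof.
elim: n al be ga t => [|n IH] al be ga t.
  rewrite vec0 mxE /Cn !sum_t0 good0 /stOK !carry0 expn0 divr1.
  by case: t => -[|[|[|[|[|[|[|[|t]]]]]]]] Ht.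
case/tupleP: al => a al; case/tupleP: be => b be; case/tupleP: ga => g ga.
rewrite vec_cons Amv Cn_step natr_sum mulr_suml; apply: eq_bigr => m _.
rewrite IH natrM expnS natrM; field.
by rewrite pnatr_eq0 expn_eq0.
Qed.

Lemma adp_tot n (al be ga : bv n) : adp al be ga = tot (vec al be ga).
Proof.
rewrite /adp /tot powE.
under [RHS]eq_bigr do rewrite vec_Cn.
rewrite -mulr_suml -natr_sum; congr (_%:R / _).
rewrite cardsE -sum1_card big_mkcond.
transitivity (\sum_(x : bv n) \sum_(y : bv n) (good al be ga x y : nat)).
  rewrite pair_big /=; apply: eq_bigr => p _.
  rewrite -[_ \in _]/(good al be ga p.1 p.2).
  by case: (good _ _ _ _ _).
symmetry; rewrite /Cn exchange_big; apply: eq_bigr => x _.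
rewrite exchange_big; apply: eq_bigr => y _ /=.
under eq_bigr do rewrite -(mul1n (_ && _)) mul_andb.
rewrite -big_distrr /= /stOK.
by rewrite (pick8 (fun _ _ _ => 1%N)) muln1.
Qed.

Lemma cadpE c n (al be ga : bv n) :
  cadp c al be ga = \sum_(j < 8) (odd j == c)%:R * vec al be ga j 0.
Proof.
rewrite /cadp /vec -mulmxA mxE; apply: eq_bigr => j _; by rewrite !mxE.
Qed.

Lemma tot_cadp n (al be ga : bv n) :
  tot (vec al be ga) = cadp false al be ga + cadp true al be ga.
Proof.
rewrite /tot !cadpE -big_split; apply: eq_bigr => j _ /=.
by case: (odd j) => /=; ring.
Qed.

Lemma cadp_ge0 c n (al be ga : bv n) : 0 <= cadp c al be ga.
Proof.
rewrite cadpE; apply: sumr_ge0 => j _; apply: mulr_ge0 => //.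
exact: vec_ge0.
Qed.

Lemma star_tot n (al : bv n) :
  tot (vec al al (zerov n)) =
  (if n is 0 then 1 else L false (behead al) + L true (behead al)).
Proof.
case: n al => [|n] al.
  by rewrite vec0 /tot sum8 !mxE /=; lra.
case/tupleP: al => a al; rewrite zerov_cons vec_cons tot_step /=.
have [H0 H6 Hodd] := star_inv al.
move: H0 H6 (Hodd (@Ordinal 8 1 isT) isT) (Hodd (@Ordinal 8 3 isT) isT)
  (Hodd (@Ordinal 8 5 isT) isT) (Hodd (@Ordinal 8 7 isT) isT).
rewrite /Mc /ind !sum8.
by case: a => /= -> -> -> -> -> ->; lra.
Qed.

Lemma star_cadp1 n (al : bv n) : cadp true al al (zerov n) = 0.
Proof.
rewrite cadpE; apply: big1 => j _.
have [_ _ Hodd] := star_inv al.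
by case oj: (odd j); [rewrite Hodd // mulr0 | rewrite mul0r].
Qed.

Lemma adp_max n (al be ga : bv n) : adp al be ga <= adp al al (zerov n).
Proof. by rewrite !adp_tot star_tot; apply: tot_le. Qed.

Lemma maxBG_ub n (f : bv n -> bv n -> rat) M :
  (forall b g, f b g <= M) -> maxBG f <= M.
Proof.
move=> H; rewrite /maxBG; elim/big_rec: _ => [|p x _ Hx]; first exact: H.
by rewrite ge_max H Hx.
Qed.

Lemma maxBG_lb n (f : bv n -> bv n -> rat) b g : f b g <= maxBG f.
Proof.
rewrite /maxBG; have : (b, g) \in index_enum (bv n * bv n)%type.
  exact: mem_index_enum.
elim: (index_enum _) => // p s IH; rewrite inE big_cons => /orP [/eqP <-|/IH H].
  by rewrite le_max lexx.
by rewrite le_max H orbT.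
Qed.


Local Open Scope ring_scope.
Unset Implicit Arguments. Set Strict Implicit.

Theorem lemma4 (n : nat) (alpha : bv n) (c : bool) :
  [/\ maxBG (fun beta gamma => cadp c alpha beta gamma)
        <= maxBG (fun beta gamma => cadp false alpha beta gamma),
      maxBG (fun beta gamma => cadp false alpha beta gamma)
        = maxBG (fun beta gamma => adp alpha beta gamma)
    & maxBG (fun beta gamma => adp alpha beta gamma)
        = adp alpha alpha (zerov n)].
Proof.
have hsum b g : adp alpha b g = cadp false alpha b g + cadp true alpha b g.
  by rewrite adp_tot tot_cadp.
have hge := cadp_ge0.
have hstar : adp alpha alpha (zerov n) = cadp false alpha alpha (zerov n).
  by rewrite hsum star_cadp1 addr0.
have hc b g c' : cadp c' alpha b g <= adp alpha b g.
  have := hge false _ alpha b g; have := hge true _ alpha b g.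
  rewrite hsum; case: c' => /=; lra.
have h0 : adp alpha alpha (zerov n) <=
    maxBG (fun beta gamma => cadp false alpha beta gamma).
  by rewrite hstar; exact: (maxBG_lb (fun beta gamma => cadp false alpha beta gamma)).
split.
- apply: maxBG_ub => b g.
  by apply: le_trans (hc b g c) _; apply: le_trans (adp_max _ _ _) h0.
- apply/le_anti/andP; split.
    apply: maxBG_ub => b g; apply: le_trans (hc b g false) _.
    exact: (maxBG_lb (fun beta gamma => adp alpha beta gamma)).
  by apply: maxBG_ub => b g; apply: le_trans (adp_max _ _ _) h0.
- apply/le_anti/andP; split.
    by apply: maxBG_ub => b g; apply: adp_max.
  exact: (maxBG_lb (fun beta gamma => adp alpha beta gamma)).
Qed.
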